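(* Let $K$ be a field with algebraic closure $\overline{K}$, $U=\{u_1,\dots,u_d\}$ parameters and $X=\{x_1,\dots,x_n\}$ variables ordered $u_1\prec\dots\prec u_d\prec x_1\prec\dots\prec x_n$. Let $\mathbf{P}$ be a parametric system in $K[U][X]$ and $\{\mathbf{C}_1,\dots,\mathbf{C}_m\}$ a Wu's decomposition of $\mathbf{P}$ in $K[U][X]$. Let $\mathbb{S}$ be the set of those $\mathbf{C}_i$ that are non-contradictory ascending chains and $\mathbb{CS}$ the set of those $\mathbf{C}_i$ that are contradictory ascending chains. Then for every $a\in\overline{K}^d\setminus\bigcup_{\mathbf{CS}\in\mathbb{CS}}\mathrm{V}^U(\mathbf{CS})$, \[\mathrm{V}(\mathbf{P}(a))=\bigcup_{\mathbf{C}\in\mathbb{S}}\mathrm{V}(\mathbf{C}(a)\setminus\mathrm{I}(\mathbf{C})(a)).\]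
   Context: A parametric system is a non-empty finite subset of $K[U][X]\setminus K[X]$. For $F\in K[U][X]\setminus\{0\}$, its class is the largest $p$ with $\deg(F,x_p)>0$; if it is $p>0$ the main variable is $x_p$ and, writing $F=C_0x_p^m+\dots+C_m$ with $C_0\ne0$, the initial is $\mathrm{I}(F)=C_0$. A non-contradictory ascending chain is a set $\{C_1,\dots,C_t\}$ with $0<\mathrm{cls}(C_1)<\dots<\mathrm{cls}(C_t)$ and each $C_i$ reduced w.r.t. the earlier ones (degree in $\mathrm{mvar}(C_j)$ less than $\deg(C_j,\mathrm{mvar}(C_j))$ for $j<i$); a contradictory ascending chain is a set $\{F\}$ with $0\neq F\in K[U]$. $\mathrm{I}(\mathbf{C})=\prod_i\mathrm{I}(C_i)$. An ascending chain $\mathbf{C}$ is a characteristic set of $\mathbf{P}$ if $\mathbf{C}\subset\langle\mathbf{P}\rangle_{K[U][X]}$ and the successive pseudo-remainder (w.r.t. main variables, last element first) of every element of $\mathbf{P}$ by $\mathbf{C}$ is $0$. A Wu's decomposition of $\mathbf{P}$ is the finite set of ascending chains produced by Wu's method: compute a characteristic set $\mathbf{C}$ of $\mathbf{P}$; if $\mathbf{C}=\{C_1,\dots,C_t\}$ is non-contradictory, recursively apply the method to each $\mathbf{P}\cup\mathbf{C}\cup\{\mathrm{I}(C_i)\}$, $1\le i\le t$; all characteristic sets obtained form the decomposition. For $a\in\overline{K}^d$, $F(a)$ denotes substitution of $a$ for $U$; $\mathrm{V}^U(\mathbf{B})$ is the common zero set in $\overline{K}^d$ of $\mathbf{B}\subset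 K[U]$; for subsets of $\overline{K}[X]$, $\mathrm{V}(\cdot)$ is the common zero set in $\overline{K}^n$ and $\mathrm{V}(\mathbf{Q}\setminus H)=\mathrm{V}(\mathbf{Q})\setminus\mathrm{V}(H)$. *)

(* Defs.v *)
(* K[U][X] is represented as {mpoly {mpoly K[d]}[n]}: polynomials in the
   variables X = x_1..x_n (indices 'I_n, x_{i+1} <-> index i) whose
   coefficients are polynomials in the parameters U = u_1..u_d. *)
From HB Require Import structures.
From mathcomp Require Import all_boot all_order all_algebra.
From mathcomp Require Import mpoly.
Set Implicit Arguments. Unset Strict Implicit. Unset Printing Implicit Defensive.
Import Order.TTheory GRing.Theory.
Local Open Scope ring_scope.

Section Wu.
Variables (R : comNzRingType) (n : nat).
Local Notation Pol := {mpoly R[n]}.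

Definition degx (F : Pol) (i : 'I_n) : nat := (\max_(m <- msupp F) m i)%N.

Definition cls (F : Pol) : nat := (\max_(i < n | (0 < degx F i)%N) i.+1)%N.

Definition mvar (F : Pol) : option 'I_n := [pick i : 'I_n | cls F == i.+1].

Definition mnm_zero_at (m : 'X_{1..n}) (i : 'I_n) : 'X_{1..n} :=
  [multinom (if j == i then 0%N else m j) | j < n].

Definition coefx (F : Pol) (i : 'I_n) (k : nat) : Pol :=
  \sum_(m <- msupp F | m i == k) F@_m *: 'X_[mnm_zero_at m i].

Definition lcx (F : Pol) (i : 'I_n) : Pol := coefx F i (degx F i).

Definition init (F : Pol) : Pol :=
  if mvar F is Some i then lcx F i else F.

Definition prem_step (F : Pol) (i : 'I_n) (G : Pol) : Pol :=
  if (degx F i <= degx G i)%N then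
    lcx F i * G - lcx G i * 'X_i ^+ (degx G i - degx F i) * F
  else G.

(* pseudo-remainder of G by F w.r.t. x_i (deg(F,x_i) > 0 assumed);
   degx G i steps suffice for the degree in x_i to drop below deg(F,x_i) *)
Definition premx (G F : Pol) (i : 'I_n) : Pol :=
  iter (degx G i) (prem_step F i) G.

(* pseudo-remainder w.r.t. the main variable of F; by a nonzero F of
   class 0 (i.e. F in K[U]) the pseudo-remainder is 0 *)
Definition prem (G F : Pol) : Pol :=
  if mvar F is Some i then premx G F i else 0.

(* successive pseudo-remainder by the chain C = [:: C_1; ...; C_t]
   (last element first) *)
Definition sprem (G : Pol) (C : seq Pol) : Pol :=
  foldr (fun c r => prem r c) G C.

Definition in_ideal (P : seq Pol) (f : Pol) : Prop :=
  exists qs : seq Pol, size qs = size P /\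
    f = \sum_(j < size P) qs`_j * P`_j.

Definition nc_chain (C : seq Pol) : Prop :=
  (forall j, (j < size C)%N -> (0 < cls C`_j)%N) /\
  (forall j k, (j < k < size C)%N ->
     (cls C`_j < cls C`_k)%N /\
     (forall i, mvar C`_j = Some i -> (degx C`_k i < degx C`_j i)%N)).

Definition c_chain (C : seq Pol) : Prop :=
  exists F : R, F != 0 /\ C = [:: F%:MP].

Definition asc_chain (C : seq Pol) : Prop := nc_chain C \/ c_chain C.

Definition init_chain (C : seq Pol) : Pol := \prod_(c <- C) init c.

Definition char_set (P C : seq Pol) : Prop :=
  asc_chain C /\ (forall c, c \in C -> in_ideal P c) /\
  (forall p, p \in P -> sprem p C = 0).

(* D is a Wu's decomposition of P: the list of all characteristic sets
   produced by (one run of) Wu's method *)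
Inductive wu_dec : seq Pol -> seq (seq Pol) -> Prop :=
| WuContr P C : char_set P C -> c_chain C -> wu_dec P [:: C]
| WuNonContr P C (Ds : seq (seq (seq Pol))) :
    char_set P C -> nc_chain C -> size Ds = size C ->
    (forall j, (j < size C)%N -> wu_dec (P ++ C ++ [:: init C`_j]) (nth [::] Ds j)) ->
    wu_dec P (C :: flatten Ds).

End Wu.

Definition in_KX (K : fieldType) (d n : nat) (F : {mpoly {mpoly K[d]}[n]}) : Prop :=
  forall m, exists c : K, F@_m = c%:MP.

Definition evalU (K : fieldType) (L : fieldType) (iota : {rmorphism K -> L})
  (d n : nat) (a : 'I_d -> L) (F : {mpoly {mpoly K[d]}[n]}) : {mpoly L[n]} :=
  map_mpoly (fun c : {mpoly K[d]} => (map_mpoly iota c).@[a]) F.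

Definition alg_closure (K : fieldType) (L : closedFieldType)
  (iota : {rmorphism K -> L}) : Prop :=
  forall x : L, exists p : {poly K}, p != 0 /\ root (map_poly iota p) x.

(* Main.v *)
Require Import Defs.
From HB Require Import structures.
From mathcomp Require Import all_boot all_order all_algebra.
From mathcomp Require Import mpoly.
Import GRing.Theory.
Local Open Scope ring_scope.

Section Gen.
Variables (R : comNzRingType) (n : nat) (L : fieldType).
Variable phi : {rmorphism {mpoly R[n]} -> L}.
Implicit Types (F G : {mpoly R[n]}).

Lemma prem_step_id F i G : exists k q,
  lcx F i ^+ k * G = prem_step F i G + q * F.
Proof.
rewrite /prem_step; case: ifP => _.
  exists 1%N, (lcx G i * 'X_i ^+ (degx G i - degx F i)).
  by rewrite expr1 subrK.
by exists 0%N, 0; rewrite expr0 mul1r mul0r addr0.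
Qed.

Lemma iter_id F i k0 G : exists k q,
  lcx F i ^+ k * G = iter k0 (prem_step F i) G + q * F.
Proof.
elim: k0 => [|k0 [k [q IH]]] /=.
  by exists 0%N, 0; rewrite expr0 mul1r mul0r addr0.
have [k' [q' E]] := prem_step_id F i (iter k0 (prem_step F i) G).
exists (k' + k)%N, (q' + lcx F i ^+ k' * q).
by rewrite exprD -mulrA IH mulrDr E mulrDl mulrA addrA.
Qed.

Lemma prem_id F G : exists k q, init F ^+ k * G = prem G F + q * F.
Proof.
rewrite /prem /init; case: (mvar F) => [i|].
  exact: iter_id.
by exists 1%N, G; rewrite expr1 add0r mulrC.
Qed.

Lemma sprem_zero G C : (forall c, c \in C -> phi c = 0) ->
  (forall c, c \in C -> phi (init c) != 0) ->
  phi (sprem G C) = 0 -> phi G = 0.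
Proof.
elim: C => [//|c C IH] Hc Hi /= H.
apply: IH.
- by move=> c' Hc'; apply: Hc; rewrite inE Hc' orbT.
- by move=> c' Hc'; apply: Hi; rewrite inE Hc' orbT.
have [k [q E]] := prem_id c (sprem G C).
have := congr1 phi E.
rewrite rmorphD !rmorphM /= H (Hc c (mem_head _ _)) mulr0 addr0 rmorphXn /=.
move/eqP; rewrite mulf_eq0 expf_eq0 (negbTE (Hi c (mem_head _ _))) andbF /=.
by move/eqP.
Qed.

Lemma ideal_zero P c : in_ideal P c -> (forall p, p \in P -> phi p = 0) ->
  phi c = 0.
Proof.
move=> [qs [_ ->]] HP; rewrite rmorph_sum /= big1 // => j _.
by rewrite rmorphM /= (HP P`_j) ?mulr0 // mem_nth.
Qed.

Lemma wu_sprem (P : seq {mpoly R[n]}) D : wu_dec P D -> forall C, C \in D ->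
  forall p, p \in P -> sprem p C = 0.
Proof.
elim=> {P D} [P C [_ [_ H]] _ | P C Ds [_ [_ H]] _ Hs _ IH] C'.
  by rewrite inE => /eqP ->.
rewrite inE => /orP [/eqP -> //|].
move=> /flattenP [s Hs' HC'] p Hp.
have [j Hj Ej] : exists2 j, (j < size C)%N & s = nth [::] Ds j.
  by exists (index s Ds); rewrite -?Hs ?index_mem // nth_index.
apply: (IH j Hj); first by rewrite -Ej.
by rewrite mem_cat Hp.
Qed.

End Gen.

Section Gen2.
Variables (R : comNzRingType) (n : nat) (L : fieldType).
Variable phi : {rmorphism {mpoly R[n]} -> L}.

Lemma wu_fwd (P : seq {mpoly R[n]}) D : wu_dec P D ->
  (forall CS, CS \in D -> c_chain CS -> exists2 F, F \in CS & phi F != 0) ->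
  (forall p, p \in P -> phi p = 0) ->
  exists2 C, C \in D & [/\ nc_chain C, forall c, c \in C -> phi c = 0 &
                         phi (init_chain C) != 0].
Proof.
elim=> {P D} [P C [_ [HI _]] Hc | P C Ds [_ [HI _]] Hnc Hs _ IH] Ha HP.
  have [F HF] := Ha C (mem_head _ _) Hc.
  by rewrite (@ideal_zero _ _ _ phi _ _ (HI F HF) HP) eqxx.
have HC : forall c, c \in C -> phi c = 0 by move=> c Hc; exact: @ideal_zero _ _ _ phi _ _ (HI c Hc) HP.
have [Hn|] := boolP (phi (init_chain C) != 0).
  by exists C; rewrite ?mem_head.
rewrite negbK /init_chain rmorph_prod /= prodf_seq_eq0 => /hasP [c Hc /= Hic].
pose j := index c C.
have Hj : (j < size C)%N by rewrite index_mem.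
have Hsub : forall CS, CS \in nth [::] Ds j -> CS \in C :: flatten Ds.
  move=> CS HCS; rewrite inE; apply/orP; right.
  by apply/flattenP; exists (nth [::] Ds j); rewrite // mem_nth // Hs.
have H1 : forall CS, CS \in nth [::] Ds j -> c_chain CS ->
    exists2 F, F \in CS & phi F != 0.
  by move=> CS HCS; apply: Ha; apply: Hsub.
have H2 : forall p, p \in P ++ C ++ [:: init C`_j] -> phi p = 0.
  move=> p; rewrite !mem_cat => /or3P [Hp|Hp|]; first exact: HP.
    exact: HC.
  by rewrite inE nth_index // => /eqP ->; apply/eqP.
have [C' HC' HH] := IH j Hj H1 H2.
by exists C' => //; apply: Hsub.
Qed.

End Gen2.

Lemma constC (R S : ringType) (m : nat) (h : {additive R -> S}) (c : R)
  (v : 'I_m -> S) :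
  meval v (map_mpoly h c%:MP_[m]) = 0 -> map_mpoly h c%:MP_[m] = 0.
Proof. by rewrite map_mpolyC mevalC => ->; rewrite mpolyC0. Qed.

Theorem corollary2 (K : fieldType) (L : closedFieldType)
  (iota : {rmorphism K -> L}) (Hcl : alg_closure iota)
  (d n : nat) (P : seq {mpoly {mpoly K[d]}[n]})
  (HP0 : P != [::]) (HPX : forall p, p \in P -> ~ in_KX p)
  (D : seq (seq {mpoly {mpoly K[d]}[n]})) (HD : wu_dec P D)
  (a : 'I_d -> L)
  (Ha : forall CS, CS \in D -> c_chain CS ->
          ~ (forall F, F \in CS -> evalU iota a F = 0)) :
  forall x : 'I_n -> L,
    (forall p, p \in P -> (evalU iota a p).@[x] = 0) <->
    (exists2 C, C \in D &
       [/\ nc_chain C,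
           forall c, c \in C -> (evalU iota a c).@[x] = 0 &
           (evalU iota a (init_chain C)).@[x] != 0]).
Proof.
move=> x.
pose g : {rmorphism {mpoly K[d]} -> L} := (meval a \o map_mpoly iota)%FUN.
pose evr : {rmorphism {mpoly {mpoly K[d]}[n]} -> L} := (meval x \o map_mpoly g)%FUN.
have E : forall F, (evalU iota a F).@[x] = evr F by [].
have EU : forall F, evalU iota a F = map_mpoly g F by [].
split.
- move=> HP; apply: (@wu_fwd _ _ _ evr _ _ HD) => // CS HCS Hcs.
  case: (Hcs) => F [_ EF]; exists F%:MP; first by rewrite EF mem_head.
  apply/negP => /eqP H0; apply: (Ha CS HCS Hcs) => F'; rewrite EF inE => /eqP ->.
  rewrite EU; apply: (@constC _ _ n g F x); exact: H0.
- move=> [C HC [_ HCz Hi]] p Hp.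
  rewrite E. apply: (@sprem_zero _ _ _ evr _ C).
  + by move=> c Hc; rewrite -E HCz.
  + move=> c Hc; move: Hi; rewrite E /init_chain rmorph_prod /= prodf_seq_neq0.
    by move=> /allP /(_ c Hc).
  + by rewrite (@wu_sprem _ _ _ _ HD _ HC _ Hp) rmorph0.
Qed.
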